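(* Let $T$ be a DAT with duration vector $d$, and let $\mathcal{O}\in\mathcal{S}_T$ be a successful attack. Then there exists an exact time assignment $f$ with $f_{\mathrm{R}_T}\le\mathrm{t}(\mathcal{O},d)$.
   Context: A dynamic attack tree (DAT) is a finite rooted directed acyclic graph $T=(N,E)$ (edges point from a node to its children) with root $\mathrm{R}_T$, in which each node $v$ has a type $\gamma(v)\in\{\mathtt{BAS},\mathtt{OR},\mathtt{AND},\mathtt{SAND}\}$, with $\gamma(v)=\mathtt{BAS}$ if and only if $v$ is a leaf. Every node of type $\mathtt{SAND}$ comes with a fixed linear ordering $v_1,\dots,v_n$ of its children, written $v=\mathtt{SAND}(v_1,\dots,v_n)$; similarly one writes $v=\mathtt{OR}(v_1,\dots,v_n)$, $v=\mathtt{AND}(v_1,\dots,v_n)$. $N_\gamma$ denotes the set of nodes of type $\gamma$. For a node $v$, $B_v$ is the set of nodes of type $\mathtt{BAS}$ that are descendants of $v$ (reachable from $v$ by a directed path, including $v$ itself). An attack on $T$ is a pair $\mathcal{O}=(A,\prec)$ where $A\subseteq N_{\mathtt{BAS}}$ and $\prec$ is a strict partial order on $A$. An attack $(A,\prec)$ reaches a node $v$, defined recursively: if $v\in N_{\mathtt{BAS}}$, iff $v\in A$; if $v=\mathtt{OR}(v_1,\dots,v_n)$, iff it reaches some $v_i$; if $v=\mathtt{AND}(v_1,\dots,v_n)$, iff it reaches all $v_i$; if $v=\mathtt{SAND}(v_1,\dots,v_n)$, iff it reaches all $v_i$ and for every $i<n$, every $a\in A\cap B_{v_i}$ and every $a'\in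 A\cap B_{v_{i+1}}$ one has $a\prec a'$. An attack is successful if it reaches $\mathrm{R}_T$; $\mathcal{S}_T$ is the set of successful attacks. A duration vector is $d\in\mathbb{R}_{\ge0}^{N_{\mathtt{BAS}}}$. For an attack $\mathcal{O}=(A,\prec)$, $\mathrm{t}(\mathcal{O},d)=\max_C\sum_{a\in C}d_a$, the maximum over all maximal chains $C$ of $(A,\prec)$ (equal to $0$ if $A=\varnothing$). Time assignments: for a node $v$ with ordered children $v_1,\dots,v_n$ and $i<n$, let $Z^v_i=B_{v_i}\times B_{v_{i+1}}$. A time assignment is a vector $f\in[0,\infty]^N$ such that: (1) $f_a\ge d_a$ for every $a\in N_{\mathtt{BAS}}$; (2) $f_v\ge\min_i f_{v_i}$ for every $v=\mathtt{OR}(v_1,\dots,v_n)$; (3) $f_v\ge\max_i f_{v_i}$ for every $v=\mathtt{AND}(v_1,\dots,v_n)$; (4) for every $v=\mathtt{SAND}(v_1,\dots,v_n)$: (a) $f_v\ge f_{v_n}$; (b) if $f_{v_i}=\infty$ for some $i\le n$ then $f_v=\infty$; (c) if there exist $i<n$ and $(a,a')\in Z^v_i$ with $f_{a'}-d_{a'}<f_a<\infty$, then $f_v=\infty$. A time assignment is exact if equality holds in (2) and (3) for all OR- and AND-nodes, and for every SAND-node $v$ for which neither the premise of (4b) nor the premise of (4c) holds, one has $f_v=f_{v_n}$. *)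

(* Defs.v *)
From HB Require Import structures.
From mathcomp Require Import all_boot all_order all_algebra.
From mathcomp Require Import reals constructive_ereal.
Set Implicit Arguments. Unset Strict Implicit. Unset Printing Implicit Defensive.
Import Order.TTheory GRing.Theory Num.Theory.

Inductive ntype := BAS | OR | AND | SAND.
Definition ntype_eqb (x y : ntype) : bool :=
  match x, y with
  | BAS, BAS | OR, OR | AND, AND | SAND, SAND => true | _, _ => false end.
Lemma ntype_eqP : Equality.axiom ntype_eqb.
Proof. by case; case; constructor. Qed.
HB.instance Definition _ := hasDecEq.Build ntype ntype_eqP.

(* A DAT on the finite node set N: ordered list of children of each node
   (the edges point from a node to its children), node types, and root. *)
Record dat (N : finType) := Dat {
  children : N -> seq N;
  ntyp : N -> ntype;
  droot : N }.

Section DAT.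
Variables (N : finType) (T : dat N).

Definition edge : rel N := fun u v => v \in children T u.

Definition wf_dat : Prop :=
  [/\ forall v, uniq (children T v),
      forall u v, edge u v -> ~~ connect edge v u,
      forall v, connect edge (droot T) v
    & forall v, (ntyp T v == BAS) = (children T v == [::])].

Definition Bset (v : N) : {set N} :=
  [set a | connect edge v a & ntyp T a == BAS].

Definition attack (A : {set N}) (prec : rel N) : Prop :=
  [/\ forall a, a \in A -> ntyp T a = BAS,
      forall a b, prec a b -> (a \in A) && (b \in A),
      forall a, a \in A -> ~~ prec a a
    & forall a b c, a \in A -> b \in A -> c \in A ->
        prec a b -> prec b c -> prec a c].

Definition sand_ok (A : {set N}) (prec : rel N) (v : N) : Prop :=
  forall i, i.+1 < size (children T v) ->
    forall a a', a \in A -> a' \in A ->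
      a \in Bset (nth v (children T v) i) ->
      a' \in Bset (nth v (children T v) i.+1) -> prec a a'.

(* "the attack (A, prec) reaches v", defined recursively (inductively,
   which on a DAG is the same as the recursive definition). *)
Inductive reaches (A : {set N}) (prec : rel N) : N -> Prop :=
| reach_BAS v : ntyp T v = BAS -> v \in A -> reaches A prec v
| reach_OR v c : ntyp T v = OR -> c \in children T v -> reaches A prec c ->
    reaches A prec v
| reach_AND v : ntyp T v = AND ->
    (forall c, c \in children T v -> reaches A prec c) -> reaches A prec v
| reach_SAND v : ntyp T v = SAND ->
    (forall c, c \in children T v -> reaches A prec c) ->
    sand_ok A prec v -> reaches A prec v.

Definition successful (A : {set N}) (prec : rel N) : Prop :=
  reaches A prec (droot T).

Variable R : realType.

Definition is_chain (A : {set N}) (prec : rel N) (C : {set N}) : bool :=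
  (C \subset A) &&
  [forall a in C, forall b in C, (a == b) || prec a b || prec b a].

Definition is_max_chain (A : {set N}) (prec : rel N) (C : {set N}) : bool :=
  is_chain A prec C &&
  [forall D : {set N}, (C \proper D) ==> ~~ is_chain A prec D].

(* t(O, d) : maximum over maximal chains of the total duration (0 if A empty,
   in which case the only maximal chain is empty) *)
Definition attack_time (A : {set N}) (prec : rel N) (d : N -> R) : R :=
  (\big[Num.max/0]_(C : {set N} | is_max_chain A prec C) \sum_(a in C) d a)%R.

Local Open Scope ereal_scope.

Definition Zpair (v : N) (i : nat) (a a' : N) : bool :=
  (a \in Bset (nth v (children T v) i)) &&
  (a' \in Bset (nth v (children T v) i.+1)).

Definition sand_prem_b (f : N -> \bar R) (v : N) : Prop :=
  exists2 c, c \in children T v & f c = +oo.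

Definition sand_prem_c (d : N -> R) (f : N -> \bar R) (v : N) : Prop :=
  exists i, exists a, exists a',
    [/\ (i.+1 < size (children T v))%N, Zpair v i a a',
        f a' - (d a')%:E < f a & f a < +oo].

Definition last_child (v : N) : N := last v (children T v).

Definition time_assignment (d : N -> R) (f : N -> \bar R) : Prop :=
  [/\ forall v, 0 <= f v,
      forall a, ntyp T a = BAS -> (d a)%:E <= f a,
      forall v, ntyp T v = OR ->
        \big[Order.min/+oo]_(c <- children T v) f c <= f v,
      forall v, ntyp T v = AND ->
        \big[Order.max/-oo]_(c <- children T v) f c <= f v
    & forall v, ntyp T v = SAND ->
        [/\ f (last_child v) <= f v,
            sand_prem_b f v -> f v = +oo
          & sand_prem_c d f v -> f v = +oo]].

Definition exact_ta (d : N -> R) (f : N -> \bar R) : Prop :=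
  [/\ forall v, ntyp T v = OR ->
        f v = \big[Order.min/+oo]_(c <- children T v) f c,
      forall v, ntyp T v = AND ->
        f v = \big[Order.max/-oo]_(c <- children T v) f c
    & forall v, ntyp T v = SAND ->
        ~ sand_prem_b f v -> ~ sand_prem_c d f v -> f v = f (last_child v)].

End DAT.

(* Main.v *)
Require Import Defs.
From HB Require Import structures.
From mathcomp Require Import all_boot all_order all_algebra.
From mathcomp Require Import reals constructive_ereal boolp.
Import Order.TTheory GRing.Theory Num.Theory.
Set Implicit Arguments. Unset Strict Implicit. Unset Printing Implicit Defensive.

Definition meas (N : finType) (T : dat N) (v : N) : nat :=
  #|[set w | connect (edge T) v w]|.

Lemma meas_lt (N : finType) (T : dat N) (HT : wf_dat T) u v :
  v \in children T u -> meas T v < meas T u.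
Proof.
move=> Hc; case: HT => _ Hac _ _.
have Huv : edge T u v by [].
apply: proper_card; apply/properP; split.
  apply/subsetP => w; rewrite !inE => Hw.
  by apply: connect_trans Hw; apply: connect1.
exists u; first by rewrite inE connect0.
by rewrite inE; apply: Hac.
Qed.

Lemma meas_pos (N : finType) (T : dat N) v : 0 < meas T v.
Proof. by apply/card_gt0P; exists v; rewrite inE connect0. Qed.

Lemma meas_le (N : finType) (T : dat N) v : meas T v <= #|N|.
Proof. exact: max_card. Qed.

Lemma dat_ind (N : finType) (T : dat N) (HT : wf_dat T) (P : N -> Prop) :
  (forall v, (forall c, c \in children T v -> P c) -> P v) -> forall v, P v.
Proof.
move=> IH v.
suff: forall n v, meas T v < n -> P v by apply; exact: ltnSn.
elim=> [|n IHn] w //; rewrite ltnS => Hw.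
apply: IH => c Hc; apply: IHn.
exact: leq_trans (meas_lt HT Hc) Hw.
Qed.

Lemma children_ne (N : finType) (T : dat N) (HT : wf_dat T) v :
  ntyp T v <> BAS -> children T v != [::].
Proof.
case: HT => _ _ _ H Hv; rewrite -H; apply/eqP => E; exact: Hv.
Qed.

Lemma last_child_in (N : finType) (T : dat N) v :
  children T v != [::] -> last_child T v \in children T v.
Proof.
rewrite /last_child; case: (children T v) => // x s _ /=.
exact: mem_last.
Qed.
Local Open Scope ring_scope.

Definition down (N : finType) (A : {set N}) (prec : rel N) (a : N) : {set N} :=
  [set b in A | (b == a) || prec b a].

Definition etime (R : realType) (N : finType) (A : {set N}) (prec : rel N)
  (d : N -> R) (a : N) : R :=
  \big[Num.max/0]_(C : {set N} | is_chain A prec C && (C \subset down A prec a))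
     \sum_(b in C) d b.

Lemma etime_ge0 (R : realType) (N : finType) (A : {set N}) (prec : rel N)
  (d : N -> R) a : 0 <= etime A prec d a.
Proof. exact: bigmax_ge_id. Qed.

Lemma etime_d (R : realType) (N : finType) (A : {set N}) (prec : rel N)
  (d : N -> R) a : a \in A -> d a <= etime A prec d a.
Proof.
move=> Ha.
have -> : d a = \sum_(b in [set a]) d b by rewrite big_set1.
apply: (le_bigmax_cond _ (j := [set a])).
apply/andP; split.
  apply/andP; split; first by rewrite sub1set.
  apply/forallP => x; apply/implyP; rewrite in_set1 => /eqP ->.
  apply/forallP => y; apply/implyP; rewrite in_set1 => /eqP ->.
  by rewrite eqxx.
by rewrite sub1set inE Ha eqxx.
Qed.

Lemma etime_step (R : realType) (N : finType) (T : dat N) (A : {set N}) (prec : rel N)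
  (d : N -> R) (HO : attack T A prec) a a' :
  a \in A -> a' \in A -> prec a a' ->
  etime A prec d a <= etime A prec d a' - d a'.
Proof.
case: HO => _ Hpr Hirr Htr Ha Ha' Haa'.
apply: bigmax_le.
  by rewrite subr_ge0; apply: etime_d.
move=> C /andP[/andP[CA Cch] Cd].
rewrite lerBrDr.
have Hlt : forall y, y \in C -> prec y a'.
  move=> y yC; move/subsetP: Cd => /(_ y yC); rewrite inE => /andP[yA].
  case/orP => [/eqP -> //|Hya]; exact: (Htr y a a').
have Hn : a' \notin C.
  apply/negP => Hin; have := Hlt a' Hin; apply/negP; exact: Hirr.
have -> : \sum_(b in C) d b + d a' = \sum_(b in a' |: C) d b.
  by rewrite big_setU1 //= addrC.
apply: (le_bigmax_cond _ (j := a' |: C)).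
apply/andP; split.
  apply/andP; split.
    by rewrite subUset sub1set Ha' CA.
  apply/forallP => x; apply/implyP; rewrite in_setU1 => Hx.
  apply/forallP => y; apply/implyP; rewrite in_setU1 => Hy.
  case/orP: Hx => [/eqP ->|xC]; case/orP: Hy => [/eqP ->|yC].
  - by rewrite eqxx.
  - by rewrite (Hlt y yC) !orbT.
  - by rewrite (Hlt x xC) orbT.
  - by move/forallP: Cch => /(_ x); rewrite xC /= => /forallP /(_ y); rewrite yC.
apply/subsetP => y; rewrite in_setU1 inE; case/orP => [/eqP ->|yC].
  by rewrite Ha' eqxx.
by rewrite (Hlt y yC) orbT (subsetP CA y yC).
Qed.

Lemma extend_chain (N : finType) (A : {set N}) (prec : rel N) C :
  is_chain A prec C -> exists D, is_max_chain A prec D && (C \subset D).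
Proof.
move=> HC.
have P0 : is_chain A prec C && (C \subset C) by rewrite HC subxx.
case: (@arg_maxnP _ C (fun D => is_chain A prec D && (C \subset D)) (fun D => #|D|) P0) => D /andP[HD CD] Hmax.
exists D; rewrite CD andbT /is_max_chain HD /=.
apply/forallP => D'; apply/implyP => HDD'; apply/negP => HD'.
have := Hmax D'; rewrite HD' (subset_trans CD (proper_sub HDD')) => /(_ isT) /=.
by rewrite leqNgt (proper_card HDD').
Qed.

Lemma etime_le (R : realType) (N : finType) (T : dat N) (A : {set N}) (prec : rel N)
  (d : N -> R) (HO : attack T A prec)
  (Hd : forall a, ntyp T a = BAS -> 0 <= d a) a :
  etime A prec d a <= attack_time A prec d.
Proof.
case: HO => HAb _ _ _.
apply: bigmax_le; first exact: bigmax_ge_id.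
move=> C /andP[HC _].
case: (extend_chain HC) => D /andP[HD CD].
have H1 : \sum_(b in D) d b <= attack_time A prec d by apply: le_bigmax_cond.
apply: le_trans H1.
rewrite [X in _ <= X](big_setID C) /= (setIidPr CD) lerDl.
apply: sumr_ge0 => i; rewrite inE => /andP[_ iD].
apply: Hd; apply: HAb.
by move: HD => /andP[/andP[/subsetP DA _] _]; apply: DA.
Qed.

Local Open Scope ereal_scope.

Definition Fop (R : realType) (N : finType) (T : dat N) (d : N -> R)
  (base : N -> \bar R) (h : N -> \bar R) (v : N) : \bar R :=
  match ntyp T v with
  | BAS => base v
  | OR => \big[Order.min/+oo]_(c <- children T v) h c
  | AND => \big[Order.max/-oo]_(c <- children T v) h c
  | SAND => if `[< sand_prem_b T h v >] || `[< sand_prem_c T d h v >]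
            then +oo else h (last_child T v)
  end.

Lemma Fop_ext (R : realType) (N : finType) (T : dat N) (HT : wf_dat T) (d : N -> R)
  base h1 h2 v :
  (forall c, c \in children T v -> h1 c = h2 c) ->
  (forall a, ntyp T a = BAS -> h1 a = h2 a) ->
  Fop T d base h1 v = Fop T d base h2 v.
Proof.
move=> Hc Hb; rewrite /Fop; case E: (ntyp T v) => //.
- by apply: eq_big_seq => c /Hc.
- by apply: eq_big_seq => c /Hc.
have ne : children T v != [::] by apply: children_ne => //; rewrite E.
have Zb : forall i a a', Zpair T v i a a' -> h1 a = h2 a /\ h1 a' = h2 a'.
  move=> i a a' /andP[]; rewrite !inE => /andP[_ /eqP Ha] /andP[_ /eqP Ha'].
  by split; apply: Hb.
have -> : `[< sand_prem_b T h1 v >] = `[< sand_prem_b T h2 v >].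
  apply/asboolP/asboolP => -[c Hc1 Hc2]; exists c => //.
    by rewrite -Hc.
  by rewrite Hc.
have -> : `[< sand_prem_c T d h1 v >] = `[< sand_prem_c T d h2 v >].
  apply/asboolP/asboolP => -[i [a [a' [H1 H2 H3 H4]]]];
  exists i, a, a'; have [E1 E2] := Zb _ _ _ H2.
    by rewrite -E1 -E2.
  by rewrite E1 E2.
by rewrite Hc // last_child_in.
Qed.

Definition fsol (R : realType) (N : finType) (T : dat N) (d : N -> R)
  (base : N -> \bar R) : N -> \bar R :=
  iter #|N| (Fop T d base) base.

Lemma iter_bas (R : realType) (N : finType) (T : dat N) (d : N -> R) base k a :
  ntyp T a = BAS -> iter k (Fop T d base) base a = base a.
Proof. by case: k => //= k H; rewrite /Fop H. Qed.

Lemma iter_stab (R : realType) (N : finType) (T : dat N) (HT : wf_dat T) (d : N -> R)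
  base k v : (meas T v <= k)%N ->
  iter k (Fop T d base) base v = iter k.+1 (Fop T d base) base v.
Proof.
elim: k v => [|k IH] v Hv.
  by move: Hv; rewrite leqNgt meas_pos.
rewrite [LHS]/= [RHS]/=; apply: (Fop_ext HT).
  move=> c Hc; apply: IH; rewrite -ltnS; exact: leq_trans (meas_lt HT Hc) Hv.
by move=> a Ha; rewrite {2}/Fop Ha; apply: iter_bas.
Qed.

Lemma fsol_fix (R : realType) (N : finType) (T : dat N) (HT : wf_dat T) (d : N -> R)
  base v : fsol T d base v = Fop T d base (fsol T d base) v.
Proof. by rewrite /fsol iter_stab // meas_le. Qed.

Theorem mainTheorem7 (R : realType) (N : finType) (T : dat N)
  (HT : wf_dat T) (d : N -> R)
  (Hd : forall a, ntyp T a = BAS -> (0 <= d a)%R)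
  (A : {set N}) (prec : rel N)
  (HO : attack T A prec) (Hs : successful T A prec) :
  exists f : N -> \bar R,
    [/\ time_assignment T d f, exact_ta T d f
      & (f (droot T) <= (attack_time A prec d)%:E)%E].
Proof.
pose base := fun a => if a \in A then (etime A prec d a)%:E else +oo.
have Hfix := fsol_fix HT d base.
have Hbas : forall a, ntyp T a = BAS -> fsol T d base a = base a.
  by move=> a H; rewrite Hfix /Fop H.
have Hnn : forall v, 0 <= fsol T d base v.
  apply: (dat_ind HT) => v IH; rewrite Hfix /Fop; case E: (ntyp T v).
  - rewrite /base; case: ifP => _; last exact: leey.
    by rewrite lee_fin etime_ge0.
  - rewrite big_seq; apply: le_bigmin; first exact: leey.
    exact: IH.
  - have : children T v != [::] by apply: children_ne => //; rewrite E.
    case E2: (children T v) => [|c s] // _.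
    have Hc : c \in children T v by rewrite E2 inE eqxx.
    rewrite -E2; apply: (Order.TotalTheory.bigmax_sup_seq _ _ _ _ _ Hc) => //; exact: IH.
  - case: ifP => _; first exact: leey.
    apply: IH; apply: last_child_in; apply: children_ne => //; by rewrite E.
exists (fsol T d base); split.
- split => //.
  + move=> a H; rewrite Hbas // /base; case: ifP => Ha; last exact: leey.
    by rewrite lee_fin etime_d.
  + by move=> v H; rewrite (Hfix v) /Fop H.
  + by move=> v H; rewrite (Hfix v) /Fop H.
  + move=> v H; split.
    * rewrite (Hfix v) /Fop H; case: ifP => _; [exact: leey | exact: lexx].
    * by move=> Hb; rewrite (Hfix v) /Fop H (asboolT Hb).
    * by move=> Hc; rewrite (Hfix v) /Fop H (asboolT Hc) orbT.
- split.
  + by move=> v H; rewrite (Hfix v) /Fop H.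
  + by move=> v H; rewrite (Hfix v) /Fop H.
  + by move=> v H nb nc; rewrite (Hfix v) /Fop H (asboolF nb) (asboolF nc).
suff: forall v, reaches T A prec v ->
  fsol T d base v <= (attack_time A prec d)%:E by apply.
move=> v; elim => {v}.
- move=> v H Hv; rewrite Hbas // /base Hv lee_fin; exact: (etime_le HO Hd).
- move=> v c H Hc _ IH; rewrite (Hfix v) /Fop H.
  exact: (Order.TotalTheory.bigmin_inf_seq _ _ _ _ _ Hc).
- move=> v H _ IH; rewrite (Hfix v) /Fop H big_seq.
  apply: bigmax_le; first exact: leNye.
  exact: IH.
- move=> v H _ IH Hok; rewrite (Hfix v) /Fop H.
  have nb : ~ sand_prem_b T (fsol T d base) v.
    by case=> c Hc Hinf; have := IH c Hc; rewrite Hinf.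
  have nc : ~ sand_prem_c T d (fsol T d base) v.
    case=> i [a [a' [Hi Hz Hlt Hlty]]].
    move/andP: (Hz) => [Ha Ha'].
    move: (Ha) (Ha'); rewrite !inE => /andP[_ /eqP Ba] /andP[_ /eqP Ba'].
    rewrite !Hbas // /base in Hlt Hlty.
    case HaA: (a \in A) in Hlt Hlty; last by rewrite ltxx in Hlty.
    case Ha'A: (a' \in A) in Hlt; last by [].
    have := etime_step d HO HaA Ha'A (Hok i Hi a a' HaA Ha'A Ha Ha').
    by rewrite -EFinB lte_fin in Hlt; rewrite leNgt Hlt.
  rewrite (asboolF nb) (asboolF nc) /=.
  apply: IH; apply: last_child_in; apply: children_ne => //; by rewrite H.
Qed.
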